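(* For all $\mathcal S,\mathcal S'\in\mathrm{TP}(n)$, $K_{\mathcal S}\cap K_{\mathcal S'}=K_{\mathcal S\cap\mathcal S'}$.
   Context: A rooted tree on leaf set $[n]$ has leaves labeled bijectively by $[n]$ and internal vertices each with at least two children; a clade is the set of leaves below an internal vertex, and $\mathrm{clade}(T)$ is the set of clades (including $[n]$). $\mathrm{TP}(n)$ is the collection of sets of the form $\mathrm{clade}(T_1)\cup\mathrm{clade}(T_2)$ for rooted trees $T_1,T_2$ on leaf set $[n]$. For a family $\mathcal S\subseteq 2^{[n]}$, $\mathcal S^\circ=\mathcal S\setminus\{[n]\}$, and $K_{\mathcal S}=\mathbb{R}(1,\dots,1)^T+\mathrm{cone}\{-v_C: C\in\mathcal S^\circ\}\subseteq\mathbb{R}^{\binom{[n]}{2}}$, where $v_C$ is the characteristic vector of the set $\binom{C}{2}$ of pairs contained in $C$. *)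

(* Defs.v *)
From HB Require Import structures.
From mathcomp Require Import all_boot all_order all_algebra.
From mathcomp Require Import reals.
Set Implicit Arguments. Unset Strict Implicit. Unset Printing Implicit Defensive.
Import Order.TTheory GRing.Theory Num.Theory.
Local Open Scope ring_scope.

(* Rooted trees with leaves labelled by naturals (leaf i stands for i+1 in [n]).
   An internal vertex is a [Node] with its list of children. *)
Inductive rtree := Leaf of nat | Node of seq rtree.

Fixpoint leaves (t : rtree) : seq nat :=
  match t with
  | Leaf i => [:: i]
  | Node ts => (fix lvs (us : seq rtree) : seq nat :=
                  match us with [::] => [::] | u :: us' => leaves u ++ lvs us' end) ts
  end.

Fixpoint internal_ok (t : rtree) : bool :=
  match t with
  | Leaf _ => true
  | Node ts => (1 < size ts)%N &&
               (fix ok (us : seq rtree) : bool :=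
                  match us with [::] => true | u :: us' => internal_ok u && ok us' end) ts
  end.

Definition is_tree (n : nat) (t : rtree) : bool :=
  internal_ok t && perm_eq (leaves t) (iota 0 n).

Definition leafset (n : nat) (t : rtree) : {set 'I_n} :=
  [set i : 'I_n | nat_of_ord i \in leaves t].

Fixpoint clade_seq (n : nat) (t : rtree) : seq {set 'I_n} :=
  match t with
  | Leaf _ => [::]
  | Node ts => leafset n t ::
               (fix cs (us : seq rtree) : seq {set 'I_n} :=
                  match us with [::] => [::] | u :: us' => clade_seq n u ++ cs us' end) ts
  end.

Definition clade (n : nat) (t : rtree) : {set {set 'I_n}} :=
  setT |: [set C in clade_seq n t].

Definition TP (n : nat) (S : {set {set 'I_n}}) : Prop :=
  exists T1 T2 : rtree, [/\ is_tree n T1, is_tree n T2 & S = clade n T1 :|: clade n T2].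

(* coordinates of R^{binom([n],2)} are indexed by 2-element subsets of 'I_n *)
Definition is_pair (n : nat) (p : {set 'I_n}) : bool := #|p| == 2%N.

Definition vC (R : realType) (n : nat) (C : {set 'I_n}) (p : {set 'I_n}) : R :=
  if p \subset C then 1 else 0.

Definition Sint (n : nat) (S : {set {set 'I_n}}) : {set {set 'I_n}} := S :\ setT.

(* x ∈ K_S = R(1,...,1) + cone{ -v_C : C ∈ S° } *)
Definition inK (R : realType) (n : nat) (S : {set {set 'I_n}}) (x : {set 'I_n} -> R)
  : Prop :=
  exists (t : R) (lam : {set 'I_n} -> R),
    (forall C, C \in Sint S -> 0 <= lam C) /\
    forall p, is_pair p -> x p = t - \sum_(C in Sint S) lam C * vC R C p.

(* Main.v *)
Require Import Defs.
From HB Require Import structures.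
From mathcomp Require Import all_boot all_order all_algebra.
From mathcomp Require Import reals.
Set Implicit Arguments. Unset Strict Implicit. Unset Printing Implicit Defensive.
Import Order.TTheory GRing.Theory Num.Theory.

Fixpoint lvs (us : seq rtree) : seq nat :=
  match us with [::] => [::] | u :: us' => leaves u ++ lvs us' end.

Lemma leaves_Node ts : leaves (Node ts) = lvs ts.
Proof. elim: ts => //= u us IH; congr (_ ++ _); exact: IH. Qed.

Fixpoint cs (n : nat) (us : seq rtree) : seq {set 'I_n} :=
  match us with [::] => [::] | u :: us' => clade_seq n u ++ cs n us' end.

Lemma clade_seq_Node n ts : clade_seq n (Node ts) = leafset n (Node ts) :: cs n ts.
Proof.
elim: ts => //= u us IH; congr (_ :: _); congr (_ ++ _).
have := congr1 behead IH; exact.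
Qed.

Definition lamseq n (s : seq {set 'I_n}) := forall C1 C2, C1 \in s -> C2 \in s ->
  forall i, i \in C1 -> i \in C2 -> (C1 \subset C2) || (C2 \subset C1).

Definition Pt n t := uniq (leaves t) ->
  (forall C, C \in clade_seq n t -> C \subset leafset n t) /\ lamseq (clade_seq n t).
Definition Qt n us := uniq (lvs us) ->
  (forall C, C \in cs n us -> C \subset [set i : 'I_n | nat_of_ord i \in lvs us])
  /\ lamseq (cs n us).

Lemma P_leaf n i : Pt n (Leaf i).
Proof. by move=> _; split. Qed.

Lemma Q_nil n : Qt n [::].
Proof. by move=> _; split. Qed.

Lemma Q_cons n u us : Pt n u -> Qt n us -> Qt n (u :: us).
Proof.
move=> Pu Qus; rewrite /Qt /= cat_uniq => /and3P[uu hn uus].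
have [Pu1 Pu2] := Pu uu; have [Q1 Q2] := Qus uus.
have sub1 : forall C, C \in clade_seq n u -> C \subset [set i : 'I_n | nat_of_ord i \in leaves u ++ lvs us].
  move=> C /Pu1 /subset_trans; apply; apply/subsetP => i; rewrite !inE mem_cat => ->.
  by [].
have sub2 : forall C, C \in cs n us -> C \subset [set i : 'I_n | nat_of_ord i \in leaves u ++ lvs us].
  move=> C /Q1 /subset_trans; apply; apply/subsetP => i; rewrite !inE mem_cat => ->.
  by rewrite orbT.
have disj : forall C1 C2 i, C1 \in clade_seq n u -> C2 \in cs n us -> i \in C1 -> i \in C2 -> False.
  move=> C1 C2 i /Pu1 s1 /Q1 s2 i1 i2.
  have := subsetP s1 _ i1; have := subsetP s2 _ i2; rewrite !inE => h2 h1.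
  by move/hasP: hn; apply; exists (nat_of_ord i).
split.
  by move=> C; rewrite mem_cat => /orP[/sub1|/sub2].
move=> C1 C2; rewrite !mem_cat => /orP[h1|h1] /orP[h2|h2] i i1 i2.
- exact: Pu2 h1 h2 i i1 i2.
- by case: (disj _ _ _ h1 h2 i1 i2).
- by case: (disj _ _ _ h2 h1 i2 i1).
- exact: Q2 h1 h2 i i1 i2.
Qed.

Lemma P_node n ts : Qt n ts -> Pt n (Node ts).
Proof.
move=> Q; rewrite /Pt leaves_Node clade_seq_Node => /Q [Q1 Q2].
have eqL : leafset n (Node ts) = [set i : 'I_n | nat_of_ord i \in lvs ts].
  by apply/setP => i; rewrite !inE leaves_Node.
split.
  by move=> C; rewrite inE => /orP[/eqP->|/Q1]; rewrite ?subxx // eqL.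
move=> C1 C2; rewrite !inE => /orP[/eqP->|h1] /orP[/eqP->|h2] i i1 i2.
- by rewrite subxx.
- by rewrite eqL Q1 ?orbT.
- by rewrite eqL Q1.
- exact: Q2 h1 h2 i i1 i2.
Qed.

Fixpoint tree_lam n t : Pt n t :=
  match t return Pt n t with
  | Leaf i => @P_leaf n i
  | Node ts => @P_node n ts ((fix F us : Qt n us :=
        match us return Qt n us with
        | [::] => @Q_nil n
        | u :: us' => @Q_cons n u us' (@tree_lam n u) (F us')
        end) ts)
  end.

Definition laminar n (A : {set {set 'I_n}}) := forall C1 C2, C1 \in A -> C2 \in A ->
  forall i, i \in C1 -> i \in C2 -> (C1 \subset C2) || (C2 \subset C1).

Lemma clade_laminar n T : is_tree n T -> laminar (clade n T).
Proof.
case/andP=> _ hp.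
have uT : uniq (leaves T) by rewrite (perm_uniq hp) iota_uniq.
have [_ L] := @tree_lam n T uT.
move=> C1 C2; rewrite !inE => /orP[/eqP->|h1] /orP[/eqP->|h2] i i1 i2;
  rewrite ?subsetT ?orbT //.
exact: L h1 h2 i i1 i2.
Qed.

Section Cover.
Variable n : nat.
Implicit Types (A : {set {set 'I_n}}) (Y C : {set 'I_n}).

Definition Erel A Y (u v : 'I_n) : bool :=
  (u == v) || [exists C, [&& C \in A, ~~ (Y \subset C), u \in C & v \in C]].

Lemma Erel_sym A Y u v : Erel A Y u v = Erel A Y v u.
Proof.
rewrite /Erel eq_sym; congr (_ || _); apply/existsP/existsP => -[C /and4P[a b c d]];
  by exists C; rewrite a b c d.
Qed.

Lemma Erel_trans A Y u v w : laminar A -> Erel A Y u v -> Erel A Y v w -> Erel A Y u w.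
Proof.
move=> L; rewrite /Erel => /orP[/eqP->//|h1] /orP[/eqP<-|h2]; first by rewrite h1 orbT.
case/existsP: h1 => C1 /and4P[a1 b1 c1 d1]; case/existsP: h2 => C2 /and4P[a2 b2 c2 d2].
apply/orP; right; case/orP: (L _ _ a1 a2 _ d1 c2) => s.
  by apply/existsP; exists C2; rewrite a2 b2 d2 (subsetP s _ c1).
by apply/existsP; exists C1; rewrite a1 b1 c1 (subsetP s _ d2).
Qed.

Lemma exists_nonE A Y : laminar A -> 1 < #|Y| ->
  exists u v, [/\ u \in Y, v \in Y & ~~ Erel A Y u v].
Proof.
move=> L Y2.
case: (boolP [exists u, [exists v, [&& u \in Y, v \in Y & ~~ Erel A Y u v]]]).
  by case/existsP => u /existsP[v /and3P[a b c]]; exists u, v.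
move=> H; exfalso.
have all: forall u v, u \in Y -> v \in Y -> Erel A Y u v.
  move=> u v uY vY; apply/negPn/negP => hn.
  by move/negP: H; apply; apply/existsP; exists u; apply/existsP; exists v; rewrite uY vY hn.
have [i iY] : exists i, i \in Y.
  have : 0 < #|Y| by exact: (ltn_trans _ Y2).
  by case/card_gt0P => i iY; exists i.
have [j [jY ji]] : exists j, j \in Y /\ j != i.
  have : 0 < #|Y :\ i| by rewrite (cardsD1 i Y) iY in Y2.
  by case/card_gt0P => j; rewrite !inE => /andP[a b]; exists j.
have := all i j iY jY; rewrite /Erel eq_sym (negPf ji) /= => /existsP[C0 hC0].
pose P := fun C => [&& C \in A, ~~ (Y \subset C) & i \in C].
have PC0 : P C0 by case/and4P: hC0 => a b c d; rewrite /P a b c.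
case: (arg_maxnP (fun C : {set 'I_n} => #|C|) PC0) => C /and3P[CA CY iC] Cmax.
move/negP: CY; apply; apply/subsetP => k kY.
case: (eqVneq k i) => [->//|ki].
have := all i k iY kY; rewrite /Erel eq_sym (negPf ki) /= => /existsP[C' /and4P[a b c d]].
case/orP: (L _ _ CA a _ iC c) => s.
  have PC' : P C' by rewrite /P a b c.
  have le : (#|C'| <= #|C|)%N := Cmax _ PC'.
  have [_ eqc] := subset_leqif_card s.
  have : #|C| == #|C'| by rewrite eqn_leq le (subset_leq_card s).
  by rewrite eqc => /subsetP; apply.
exact: subsetP s _ d.
Qed.

Lemma cover2 A B Y : laminar A -> laminar B -> 1 < #|Y| ->
  exists u v, [/\ u \in Y, v \in Y, u != v &
     forall C, C \in A :|: B -> u \in C -> v \in C -> Y \subset C].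
Proof.
move=> LA LB Y2.
suff [u [v [uY vY nA nB]]] : exists u v, [/\ u \in Y, v \in Y, ~~ Erel A Y u v & ~~ Erel B Y u v].
  exists u, v; split => //.
    by move: nA; rewrite /Erel negb_or => /andP[].
  move=> C; rewrite inE => /orP[CA|CB] uC vC; apply/negPn/negP => hY.
    by move/negP: nA; apply; rewrite /Erel; apply/orP; right; apply/existsP; exists C; rewrite CA hY uC vC.
  by move/negP: nB; apply; rewrite /Erel; apply/orP; right; apply/existsP; exists C; rewrite CB hY uC vC.
have [i [j [iY jY nij]]] := exists_nonE LA Y2.
case Bij: (Erel B Y i j); last by exists i, j; split; rewrite ?Bij.
have [k [l [kY lY nkl]]] := exists_nonE LB Y2.
have [m [mY nmi]] : exists m, m \in Y /\ ~~ Erel B Y m i.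
  case Bki: (Erel B Y k i); last by exists k; rewrite Bki kY.
  exists l; split => //; apply/negP => Bli; move/negP: nkl; apply.
  by apply: Erel_trans LB Bki _; rewrite Erel_sym.
have nmj : ~~ Erel B Y m j.
  apply/negP => Bmj; move/negP: nmi; apply; apply: Erel_trans LB Bmj _.
  by rewrite Erel_sym.
case Ami: (Erel A Y m i); last by exists m, i; split; rewrite ?Ami.
case Amj: (Erel A Y m j); last by exists m, j; split; rewrite ?Amj.
move/negP: nij; case; apply: Erel_trans LA _ Amj; by rewrite Erel_sym.
Qed.

End Cover.

Lemma TP_cover n (S : {set {set 'I_n}}) (Y : {set 'I_n}) : TP S -> 1 < #|Y| ->
  exists p : {set 'I_n}, [/\ is_pair p, p \subset Y &
     forall C, C \in S -> p \subset C -> Y \subset C].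
Proof.
case=> T1 [T2 [t1 t2 ->]] Y2.
have [u [v [uY vY uv H]]] := cover2 (clade_laminar t1) (clade_laminar t2) Y2.
exists [set u; v]; split.
- by rewrite /is_pair cards2 uv.
- by rewrite subUset !sub1set uY vY.
- move=> C CS; rewrite subUset !sub1set => /andP[uC vC]; exact: H.
Qed.

From mathcomp Require Import zify.
Local Open Scope ring_scope.

Section Main.
Variables (R : realType) (n : nat).
Implicit Types (S : {set {set 'I_n}}) (Y C p : {set 'I_n}) (a : {set 'I_n} -> R).

Definition Ext S a C : R := if C \in Sint S then a C else 0.
Definition gsum S a p : R := \sum_(C : {set 'I_n}) Ext S a C * vC R C p.
Definition hsum S a Y : R := \sum_(C : {set 'I_n} | Y \subset C) Ext S a C.

Lemma Ext_ge0 S a : (forall C, C \in Sint S -> 0 <= a C) -> forall C, 0 <= Ext S a C.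
Proof. by move=> h C; rewrite /Ext; case: ifP => // /h. Qed.

Lemma sum_Sint S a p :
  \sum_(C in Sint S) a C * vC R C p = gsum S a p.
Proof.
rewrite big_mkcond; apply: eq_bigr => C _; rewrite /Ext.
by case: ifP => _ //; rewrite mul0r.
Qed.

Lemma h_le_g S a p Y : (forall C, C \in Sint S -> 0 <= a C) -> p \subset Y ->
  hsum S a Y <= gsum S a p.
Proof.
move=> a0 pY; rewrite /hsum /gsum big_mkcond; apply: ler_sum => C _.
have e0 := Ext_ge0 a0 C.
rewrite /vC; case: ifP => YC.
  by rewrite (subset_trans pY YC) mulr1.
by case: ifP; rewrite ?mulr1 ?mulr0.
Qed.

Lemma h_eq_g S a p Y : p \subset Y -> (forall C, C \in S -> p \subset C -> Y \subset C) ->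
  gsum S a p = hsum S a Y.
Proof.
move=> pY H; rewrite /hsum /gsum [RHS]big_mkcond; apply: eq_bigr => C _.
rewrite /Ext /vC; case: ifP => CS; last by rewrite mul0r; case: ifP.
have CS' : C \in S by move: CS; rewrite /Sint !inE => /andP[].
have -> : (p \subset C) = (Y \subset C).
  by apply/idP/idP => [/(H _ CS')|/(subset_trans pY)].
by case: ifP; rewrite ?mulr1 ?mulr0.
Qed.

Lemma hsum_split S a Y :
  hsum S a Y = Ext S a Y + \sum_(C : {set 'I_n} | Y \proper C) Ext S a C.
Proof.
rewrite /hsum (bigD1 Y) ?subxx //=; congr (_ + _); apply: eq_bigl => C.
by rewrite properEneq eq_sym andbC.
Qed.

Lemma hsumT S a : hsum S a setT = 0.
Proof.
apply: big1 => C; rewrite subTset => /eqP ->.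
by rewrite /Ext /Sint !inE eqxx.
Qed.

End Main.

Theorem proposition3p13 (R : realType) (n : nat) (S S' : {set {set 'I_n}}) :
  TP S -> TP S' ->
  forall x : {set 'I_n} -> R,
    (inK S x /\ inK S' x) <-> inK (S :&: S') x.
Proof.
move=> TPS TPS' x; split.
- case=> -[t [a [a0 ha]]] [t' [b [b0 hb]]].
  exists t, (Ext S a); split.
    move=> C; rewrite /Sint !inE => /andP[CT /andP[CS _]].
    by rewrite /Ext /Sint !inE CT CS /=; apply: a0; rewrite /Sint !inE CT CS.
  move=> p pp.
  have key : forall Y : {set 'I_n}, (1 < #|Y|)%N -> t - hsum S a Y = t' - hsum S' b Y.
    move=> Y Y2.
    have [p0 [pp0 p0Y Hp0]] := TP_cover TPS Y2.
    have [q0 [pq0 q0Y Hq0]] := TP_cover TPS' Y2.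
    have e1 : x p0 = t - hsum S a Y by rewrite ha // sum_Sint (h_eq_g _ p0Y Hp0).
    have e2 : x q0 = t' - hsum S' b Y by rewrite hb // sum_Sint (h_eq_g _ q0Y Hq0).
    have e3 : x p0 <= t' - hsum S' b Y.
      by rewrite hb // sum_Sint lerB // h_le_g.
    have e4 : x q0 <= t - hsum S a Y.
      by rewrite ha // sum_Sint lerB // h_le_g.
    by apply/eqP; rewrite eq_le; apply/andP; split; [rewrite -e1 | rewrite -e2].
  have n2 : (1 < #|[set: 'I_n]|)%N.
    by move: pp; rewrite /is_pair => /eqP <-; apply: subset_leq_card; apply: subsetT.
  have tt' : t = t' by have := key _ n2; rewrite !hsumT !subr0.
  have hh : forall Y : {set 'I_n}, (1 < #|Y|)%N -> hsum S a Y = hsum S' b Y.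
    by move=> Y /key; rewrite tt' => /subrI.
  have AB : forall m (C : {set 'I_n}), (1 < #|C|)%N -> (n - #|C| < m)%N -> Ext S a C = Ext S' b C.
    elim=> [//|m IH] C C2 Cm.
    have := hh C C2; rewrite !hsum_split.
    have -> : \sum_(D : {set 'I_n} | C \proper D) Ext S a D = \sum_(D : {set 'I_n} | C \proper D) Ext S' b D.
      apply: eq_bigr => D CD; apply: IH.
        exact: (ltn_trans C2 (proper_card CD)).
      have CDc := proper_card CD.
      have Dn : (#|D| <= n)%N by rewrite -[X in (_ <= X)%N]card_ord max_card.
      lia.
    by move/addIr.
  rewrite ha // sum_Sint; congr (_ - _).
  rewrite big_mkcond /gsum; apply: eq_bigr => C _.
  case: ifP => // hC; rewrite /vC; case: ifP => pC; last by rewrite mulr0.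
  have C2 : (1 < #|C|)%N by rewrite -(eqP pp) subset_leq_card.
  rewrite mulr1; case CS: (C \in Sint S); last by rewrite /Ext CS.
  rewrite (AB (n - #|C|).+1 C C2 (ltnSn _)) /Ext.
  case: ifP => // CS'; exfalso.
  move: hC CS CS'; rewrite /Sint !inE => /negP hC /andP[CT CS] /andP[_ CS'].
  by apply: hC; rewrite CT CS CS'.
- case=> t [lam [l0 hl]].
  have lemK : forall T : {set {set 'I_n}}, S :&: S' \subset T -> inK T x.
    move=> T ST; exists t, (fun C => if C \in S :&: S' then lam C else 0); split.
      move=> C CT; case: ifP => h //; apply: l0.
      by move: CT; rewrite /Sint !inE => /andP[-> _]; move: h; rewrite inE.
    move=> p pp; rewrite hl //; congr (_ - _).
    rewrite big_mkcond [RHS]big_mkcond; apply: eq_bigr => C _.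
    rewrite /Sint !inE; case: (C == setT) => //=.
    case CS: (C \in S); case CS': (C \in S') => /=; rewrite ?mul0r ?if_same //.
    by rewrite (subsetP ST C) // inE CS CS'.
  split; apply: lemK; [exact: subsetIl | exact: subsetIr].
Qed.
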